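(* Let $n,m,\ell$ be integers with $n-1\ge m\ge \ell\ge 0$. Then \begin{align*} &\mathfrak Z_n(1^{\{m\}})\,\mathfrak Z_n((-1)^{\{\ell\}})\\ &=\binom{n-m+\ell-1}{n-m-1}\mathfrak Z_n(1^{\{m-\ell\}})+\Big(\prod_{r=1}^{n-1}(1-\zeta_n^r)\Big)\sum_{j=0}^{n-m-2}\binom{n-m+\ell-3-2j}{\ell-1-j}\mathcal Y_n\big(2^{\{m-\ell+1+j\}},1^{\{n-m+\ell-3-2j\}}\big). \end{align*}
   Context: Let $\zeta_n=e^{2\pi\sqrt{-1}/n}$. For integers $s_1,\dots,s_m$ (negative values allowed), define $\mathfrak Z_n(s_1,\dots,s_m):=\sum_{1\le i_1<\cdots<i_m\le n-1}\prod_{k=1}^{m}(1-\zeta_n^{i_k})^{-s_k}$ (equal to $1$ if $m=0$ and to $0$ if $m>n-1$). Define $\mathcal Y_n(s_1,\dots,s_m):=\sum_{\sigma}\mathfrak Z_n(\sigma)$, where $\sigma$ runs over all distinct rearrangements of $(s_1,\dots,s_m)$; $\mathcal Y_n$ of the empty sequence is $1$. Notation: $a^{\{k\}}$ denotes the block $a,\dots,a$ of length $k$ (so $(-1)^{\{\ell\}}$ is $-1,\dots,-1$ repeated $\ell$ times); any $\mathcal Y_n$ term in which some block has negative length is interpreted as $0$. Binomial coefficients $\binom{a}{b}$ are $0$ when $b<0$ or $b>a\ge 0$. *)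

(* Defs.v *)
From HB Require Import structures.
From mathcomp Require Import all_boot all_order all_algebra.
From mathcomp Require Import complex.
From mathcomp Require Import reals trigo.
Set Implicit Arguments.
Unset Strict Implicit.
Unset Printing Implicit Defensive.
Import Order.TTheory GRing.Theory Num.Theory.
Local Open Scope ring_scope.
Local Open Scope complex_scope.

Section Defs.
Variable R : realType.

Definition zeta (n : nat) : R[i] :=
  (cos (2 * pi / n%:R)) +i* (sin (2 * pi / n%:R)).

(* Zaux n lo s = sum over lo <= i_1 < ... < i_m <= n-1 of
   prod_k (1 - zeta_n^{i_k})^{-s_k}  (s = [:: s_1; ...; s_m]) *)
Fixpoint Zaux (n lo : nat) (s : seq int) : R[i] :=
  match s with
  | [::] => 1
  | a :: s' => \sum_(lo <= i < n) (1 - zeta n ^+ i) ^ (- a) * Zaux n i.+1 s'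
  end.

Definition Zn (n : nat) (s : seq int) : R[i] := Zaux n 1 s.

(* cal Y_n(s): sum over distinct rearrangements of s
   ([permutations s] is the duplicate-free list of all permutations of s) *)
Definition Yn (n : nat) (s : seq int) : R[i] :=
  \sum_(t <- permutations s) Zn n t.

End Defs.

(* Main.v *)
Require Import Defs.
From HB Require Import structures.
From mathcomp Require Import all_boot all_order all_algebra.
From mathcomp Require Import complex.
From mathcomp Require Import reals trigo.
From mathcomp Require Import zify ring lra.
Set Implicit Arguments. Unset Strict Implicit. Unset Printing Implicit Defensive.
Import Order.TTheory GRing.Theory Num.Theory.
Local Open Scope ring_scope.

Section Gen.
Variable F : fieldType.

Fixpoint E (vs : seq F) (s : seq int) {struct vs} : F :=
  match s with
  | [::] => 1
  | a :: s' => match vs with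
               | [::] => 0
               | v :: vs' => v ^ (- a) * E vs' s' + E vs' s
               end
  end.

Lemma E_nil s : E [::] s = (s == [::])%:R.
Proof. by case: s. Qed.

Lemma E_cons1 v vs k : E (v :: vs) (nseq k.+1 1%Z) = v^-1 * E vs (nseq k 1%Z) + E vs (nseq k.+1 1%Z).
Proof. by []. Qed.

Lemma E_consN1 v vs k : E (v :: vs) (nseq k.+1 (-1)%Z) = v * E vs (nseq k (-1)%Z) + E vs (nseq k.+1 (-1)%Z).
Proof. by rewrite /= expr1z. Qed.

Lemma E_big vs s : (size vs < size s)%N -> E vs s = 0.
Proof.
elim: vs s => [|v vs IH] [|a s] //= H.
rewrite (IH s) ?(IH (a :: s)) ?mulr0 ?addr0 // /=; lia.
Qed.

Lemma E_dual vs l : (forall v, v \in vs -> v != 0) -> (l <= size vs)%N ->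
  E vs (nseq l (-1)%Z) = (\prod_(v <- vs) v) * E vs (nseq (size vs - l) 1%Z).
Proof.
elim: vs l => [|v vs IH] l Hnz Hl.
  by case: l Hl => //= _; rewrite big_nil mulr1.
have Hv : v != 0 by apply: Hnz; rewrite inE eqxx.
have Hvs : forall w, w \in vs -> w != 0 by move=> w Hw; apply: Hnz; rewrite inE Hw orbT.
rewrite big_cons.
case: l Hl => [|l] Hl.
  rewrite subn0 [size _]/= E_cons1 [E vs (nseq _.+1 _)]E_big ?size_nseq // addr0.
  have := IH 0%N Hvs (leq0n _); rewrite subn0 /= => H1.
  rewrite mulrACA. rewrite mulfV // mul1r -H1. by case: (vs).
rewrite E_consN1 [size _]/= subSS.
case Hd: (size vs - l)%N => [|d].
  have Hl' : l = size vs by apply/eqP; rewrite eqn_leq -ltnS Hl -subn_eq0 Hd.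
  rewrite Hl' [E vs (nseq _.+1 _)]E_big ?size_nseq // addr0.
  by rewrite (IH (size vs)) // subnn mulrA; case: (vs).
have Hl1 : (l.+1 <= size vs)%N by rewrite -subn_gt0 Hd.
rewrite E_cons1 (IH l Hvs (ltnW Hl1)) Hd (IH l.+1 Hvs Hl1).
have -> : (size vs - l.+1 = d)%N by rewrite subnS Hd.
rewrite mulrDr !mulrA [v * _]mulrC -[_ * v * v^-1]mulrA mulfV // mulr1.
by rewrite addrC.
Qed.

Fixpoint Fp (vs : seq F) (i d : nat) : F :=
  match vs with
  | [::] => ((i == 0%N) && (d == 0%N))%:R
  | v :: vs' => (if i is i'.+1 then v^-1 ^+ 2 * Fp vs' i' d else 0)
               + (if d is d'.+1 then v^-1 * Fp vs' i d' else 0) + Fp vs' i d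
  end.

Lemma Fp0 vs k : Fp vs 0 k = E vs (nseq k 1%Z).
Proof.
elim: vs k => [|v vs IH] [|k] //=.
  by rewrite (IH 0%N) !add0r; case: (vs).
by rewrite !IH add0r.
Qed.

Lemma Fp_big vs i d : (size vs < i + d)%N -> Fp vs i d = 0.
Proof.
elim: vs i d => [|v vs IH] i d /= H; first by case: i d H => [|?] [|?].
case: i H => [|i] H; case: d H => [|d] H; rewrite ?IH ?mulr0 ?addr0 //; lia.
Qed.

Definition cf (m k i : nat) : nat :=
  if (i <= m)%N && (i <= k)%N then 'C(m + k - 2 * i, m - i) else 0%N.

Lemma cf_pascal m k i : (2 * i < m + k + 2)%N ->
  cf m.+1 k.+1 i = (cf m k.+1 i + cf m.+1 k i)%N.
Proof.
rewrite /cf => H.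
have [[h1 h2]|[[-> h]|[[-> h]|h]]] : ((i <= m)%N /\ (i <= k)%N) \/ (i = k.+1 /\ (k < m)%N)
   \/ (i = m.+1 /\ (m < k)%N) \/ ((m.+1 < i)%N \/ (k.+1 < i)%N) by lia.
- have -> : (i <= m.+1)%N && (i <= k.+1)%N = true by lia.
  have -> : (i <= m)%N && (i <= k.+1)%N = true by lia.
  have -> : (i <= m.+1)%N && (i <= k)%N = true by lia.
  have -> : (m.+1 + k.+1 - 2 * i = (m + k.+1 - 2 * i).+1)%N by lia.
  have -> : (m.+1 - i = (m - i).+1)%N by lia.
  rewrite binS addnC; congr (_ + _)%N; congr 'C(_, _); lia.
- have -> : (k.+1 <= m.+1)%N && (k.+1 <= k.+1)%N = true by lia.
  have -> : (k.+1 <= m)%N && (k.+1 <= k.+1)%N = true by lia.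
  have -> : (k.+1 <= m.+1)%N && (k.+1 <= k)%N = false by lia.
  rewrite addn0.
  have -> : (m.+1 + k.+1 - 2 * k.+1 = m.+1 - k.+1)%N by lia.
  have -> : (m + k.+1 - 2 * k.+1 = m - k.+1)%N by lia.
  by rewrite !binn.
- have -> : (m.+1 <= m.+1)%N && (m.+1 <= k.+1)%N = true by lia.
  have -> : (m.+1 <= m)%N && (m.+1 <= k.+1)%N = false by lia.
  have -> : (m.+1 <= m.+1)%N && (m.+1 <= k)%N = true by lia.
  by rewrite subnn !bin0.
- have -> : (i <= m.+1)%N && (i <= k.+1)%N = false by lia.
  have -> : (i <= m)%N && (i <= k.+1)%N = false by lia.
  by have -> : (i <= m.+1)%N && (i <= k)%N = false by lia.
Qed.

Lemma cf_zero m k i : (m + k + 2 <= 2 * i)%N -> cf m k.+1 i = 0%N /\ cf m.+1 k i = 0%N.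
Proof.
rewrite /cf => H.
have -> : (i <= m)%N && (i <= k.+1)%N = false by lia.
by have -> : (i <= m.+1)%N && (i <= k)%N = false by lia.
Qed.

Lemma cf_S m k i : cf m.+1 k.+1 i.+1 = cf m k i.
Proof.
rewrite /cf !ltnS subSS.
by have -> : (m.+1 + k.+1 - 2 * i.+1 = m + k - 2 * i)%N by lia.
Qed.

Lemma cf0l k i : cf 0 k i = (i == 0%N).
Proof. by case: i => [|i] //; rewrite /cf /= bin0. Qed.

Lemma cfl0 m i : cf m 0 i = (i == 0%N).
Proof. by case: i => [|i]; rewrite /cf /= ?addn0 ?subn0 ?binn ?andbF. Qed.

Lemma sum_at0 K (f : nat -> F) : (0 < K)%N ->
  \sum_(i < K) (((i : nat) == 0%N)%:R * f i) = f 0%N.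
Proof.
case: K => // K _; rewrite big_ord_recl /= mul1r big1 ?addr0 // => i _.
by rewrite mul0r.
Qed.

Lemma pieri vs m k K : (m < K)%N ->
  E vs (nseq m 1%Z) * E vs (nseq k 1%Z) =
  \sum_(i < K) (cf m k i)%:R * Fp vs i (m + k - 2 * i).
Proof.
elim: vs m k K => [|v vs IH] m k K HK.
  case: K HK => // K HK; rewrite big_ord_recl big1 ?addr0; last first.
    by move=> i _; rewrite /= mulr0.
  rewrite !E_nil /= /cf /= muln0 subn0.
  by case: m {HK} => [|m]; case: k => [|k]; rewrite /= ?addnS ?mulr0 ?mul0r ?mulr1 ?bin0.
case: m HK => [|m] HK.
  under eq_bigr do rewrite cf0l.
  rewrite (sum_at0 (fun i => Fp (v :: vs) i (0 + k - 2 * i))) //.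
  by rewrite add0n muln0 subn0 Fp0 mul1r.
case: k => [|k].
  under eq_bigr do rewrite cfl0.
  rewrite (sum_at0 (fun i => Fp (v :: vs) i (m.+1 + 0 - 2 * i))); last by lia.
  by rewrite addn0 muln0 subn0 Fp0 mulr1.
rewrite !E_cons1.
have Hr : forall y A A' B B' : F, (y*A + A')*(y*B+B') = y^+2 * (A*B) + y * (A*B' + A'*B) + A'*B'.
  by move=> y A A' B B'; ring.
rewrite Hr.
case: K HK => // K HK.
rewrite (IH m k K) ?(IH m k.+1 K.+1) ?(IH m.+1 k K.+1) ?(IH m.+1 k.+1 K.+1) //; try lia.
rewrite /= -big_split /=.
under [RHS]eq_bigr do rewrite !mulrDr.
rewrite !big_split /=.
congr (_ + _ + _).
  rewrite big_ord_recl /= mulr0 add0r mulr_sumr; apply: eq_bigr => i _.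
  rewrite /bump /= add1n cf_S.
  have -> : (m.+1 + k.+1 - 2 * i.+1 = m + k - 2 * i)%N by lia.
  by rewrite mulrCA.
rewrite -big_split mulr_sumr; apply: eq_bigr => i _ /=.
case HD: (m.+1 + k.+1 - 2 * i)%N => [|d].
  have [-> ->] : cf m k.+1 i = 0%N /\ cf m.+1 k i = 0%N by apply: cf_zero; lia.
  by rewrite !mul0r addr0 !mulr0.
rewrite cf_pascal; last by lia.
have -> : (m + k.+1 - 2 * i = d)%N by lia.
have -> : (m.+1 + k - 2 * i = d)%N by lia.
by rewrite natrD mulrDl mulrDr !(mulrCA v^-1).
Qed.

Lemma E_consH v vs t : E (v :: vs) t =
  (if t is a :: t' then v ^ (- a) * E vs t' else 0) + E vs t.
Proof. by case: t => [|a t] //=; rewrite add0r; case: (vs). Qed.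

Definition G vs s := \sum_(t <- permutations s) E vs t.

Lemma G_perm vs s1 s2 : perm_eq s1 s2 -> G vs s1 = G vs s2.
Proof. by move=> H; apply: perm_big; apply: perm_permutations. Qed.

Lemma rem1 p q : perm_eq (rem 1%Z (nseq p 2%Z ++ nseq q.+1 1%Z)) (nseq p 2%Z ++ nseq q 1%Z).
Proof.
have H1 : (1%Z \in nseq p 2%Z ++ nseq q.+1 1%Z).
  by rewrite mem_cat; apply/orP; right; rewrite mem_nseq eqxx.
rewrite -(perm_cons 1%Z).
have H2 := perm_to_rem H1; rewrite perm_sym in H2; apply: (perm_trans H2).
by rewrite -[nseq q.+1 _]/([:: 1%Z] ++ nseq q 1%Z) perm_catCA.
Qed.

Lemma G_nil s : (0 < size s)%N -> G [::] s = 0.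
Proof.
move=> Hs; rewrite /G big1_seq // => t /andP[_]; rewrite mem_permutations => /perm_size.
by case: t => [|a t] //= Hsz; rewrite -Hsz in Hs.
Qed.

Lemma headsum v vs s : (0 < size s)%N ->
  \sum_(t <- permutations s) (if t is a :: t' then v ^ (- a) * E vs t' else 0)
  = \sum_(x <- undup s) v ^ (- x) * G vs (rem x s).
Proof.
move=> Hs; rewrite (perm_big _ (permutationsE Hs)) big_allpairs_dep /=.
by apply: eq_bigr => x _; rewrite /G mulr_sumr.
Qed.

Lemma G_F vs p q : G vs (nseq p 2%Z ++ nseq q 1%Z) = Fp vs p q.
Proof.
elim: vs p q => [|v vs IH] p q.
  case: p => [|p]; case: q => [|q].
  1: by rewrite /G /= big_cons big_nil addr0.
  1-3: by rewrite G_nil // size_cat !size_nseq.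
rewrite /G.
under eq_bigr do rewrite E_consH.
rewrite big_split /= -/(G vs _) IH.
congr (_ + _).
case: p => [|p]; case: q => [|q].
  by rewrite /= big_cons big_nil !addr0.
all: rewrite headsum ?size_cat ?size_nseq //.
- have Hu : perm_eq (undup (nseq 0 2%Z ++ nseq q.+1 1%Z)) [:: 1%Z].
    apply: uniq_perm; rewrite ?undup_uniq // => x.
    by rewrite mem_undup mem_cat !mem_nseq /= !inE.
  by rewrite (perm_big _ Hu) big_seq1 (G_perm _ (rem1 0 q)) IH add0r.
- have Hu : perm_eq (undup (nseq p.+1 2%Z ++ nseq 0 1%Z)) [:: 2%Z].
    apply: uniq_perm; rewrite ?undup_uniq // => x.
    by rewrite mem_undup mem_cat !mem_nseq /= !inE orbF.
  rewrite (perm_big _ Hu) big_seq1 /= -[nseq p 2%Z ++ [::]]/(nseq p 2%Z ++ nseq 0 1%Z) IH addr0.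
  by rewrite exprVn.
- have Hu : perm_eq (undup (nseq p.+1 2%Z ++ nseq q.+1 1%Z)) [:: 2%Z; 1%Z].
    apply: uniq_perm; rewrite ?undup_uniq // => x.
    by rewrite mem_undup mem_cat !mem_nseq /= !inE.
  rewrite (perm_big _ Hu) big_cons big_seq1.
  rewrite (G_perm _ (rem1 p.+1 q)) IH.
  have -> : rem 2%Z (nseq p.+1 2%Z ++ nseq q.+1 1%Z) = nseq p 2%Z ++ nseq q.+1 1%Z by [].
  rewrite IH exprVn.
  by [].
Qed.

Lemma final vs n m l : (forall v, v \in vs -> v != 0) -> size vs = n.-1 ->
  (m < n)%N -> (l <= m)%N ->
  E vs (nseq m 1%Z) * E vs (nseq l (-1)%Z) =
  ('C(n - m + l - 1, n - m - 1))%:R * E vs (nseq (m - l) 1%Z)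
  + (\prod_(v <- vs) v)
    * \sum_(0 <= j < n - m - 1)
        (let a : int := (n%:Z - m%:Z + l%:Z - 3 - 2 * j%:Z)%R in
         let b : int := (l%:Z - 1 - j%:Z)%R in
         if (a < 0)%R || (b < 0)%R then 0
         else ('C(`|a|%N, `|b|%N))%:R
              * G vs (nseq (m - l + 1 + j) 2%Z ++ nseq `|a|%N 1%Z)).
Proof.
move=> Hnz; case: n => [|N] //= HN HmN HlM.
set P := \prod_(v <- vs) v.
have HlN : (l <= size vs)%N by rewrite HN; lia.
have HPe : P * E vs (nseq N 1%Z) = 1.
  by have := E_dual Hnz (leq0n (size vs)); rewrite subn0 HN => <-; case: (vs).
rewrite (E_dual Hnz HlN) HN mulrCA (pieri _ _ _ (K := N.+1)) //.
have -> : E vs (nseq (m - l) 1%Z) = P * Fp vs (m - l) (N - (m - l)).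
  rewrite -[E vs (nseq (m - l) 1%Z)]mul1r -HPe -mulrA [E vs (nseq N _) * _]mulrC.
  rewrite (pieri _ _ _ (K := N.+1)); last by lia.
  congr (_ * _).
  have Hml : (m - l < N.+1)%N by lia.
  rewrite (bigD1 (Ordinal Hml)) //= big1 ?addr0.
    rewrite /cf leqnn /=.
    have -> : (m - l <= N)%N by lia.
    rewrite subnn bin0 mul1r; congr Fp; lia.
  move=> i Hi.
  have Hi' : (i : nat) != (m - l)%N by apply: contra Hi => /eqP Hi; apply/eqP/val_inj.
  case: (ltnP i (m - l)) => Hil.
    by rewrite Fp_big ?mulr0 // HN; lia.
  rewrite /cf. have HH : (i <= m - l)%N = false by lia. by rewrite HH mul0r.
rewrite mulrCA -mulrDr; congr (P * _).
rewrite -(big_mkord xpredT (fun i => (cf m (N - l) i)%:R * Fp vs i (m + (N - l) - 2 * i))).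
rewrite (big_cat_nat _ (n := (m - l)%N)) //=; last by lia.
rewrite [X in X + _]big_nat_cond big1 ?add0r; last first.
  move=> i /andP[/andP[_ Hi] _]; rewrite Fp_big ?mulr0 // HN; lia.
rewrite big_ltn; last by lia.
congr (_ + _).
  rewrite /cf; have -> : (m - l <= m)%N by lia. have -> : (m - l <= N - l)%N by lia.
  have -> : (m + (N - l) - 2 * (m - l) = N - m + l)%N by lia.
  have -> : (m - (m - l) = l)%N by lia.
  have -> : (N.+1 - m + l - 1 = N - m + l)%N by lia.
  have -> : (N.+1 - m - 1 = N - m)%N by lia.
  have -> : (N - (m - l) = N - m + l)%N by lia.
  by rewrite /= -bin_sub ?leq_addl // addnK.
rewrite -{1}[(m - l).+1]add0n big_addn.
rewrite (big_cat_nat _ (n := (N - m)%N)) //=; last by lia.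
rewrite addrC (@big_nat_cond _ _ _ (N - m)%N) big1 ?add0r; last first.
  move=> j /andP[/andP[Hj1 Hj2] _].
  rewrite /cf; have -> : (j + (m - l).+1 <= N - l)%N = false by lia.
  by rewrite andbF mul0r.
have -> : (N.+1 - m - 1 = N - m)%N by lia.
apply: eq_big_nat => j /andP[_ Hj].
cbv zeta; rewrite G_F.
case: (ltnP j l) => Hjl.
  have -> : ((N.+1%:Z - m%:Z + l%:Z - 3 - 2 * j%:Z)%R < 0)%R = false by lia.
  have -> : ((l%:Z - 1 - j%:Z)%R < 0)%R = false by lia.
  have -> : (`|(N.+1%:Z - m%:Z + l%:Z - 3 - 2 * j%:Z)%R|)%N = (N - m + l - 2 - 2 * j)%N by lia.
  have -> : (`|(l%:Z - 1 - j%:Z)%R|)%N = (l - 1 - j)%N by lia.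
  rewrite /cf.
  have -> : (j + (m - l).+1 <= m)%N = true by lia.
  have -> : (j + (m - l).+1 <= N - l)%N = true by lia.
  rewrite /=.
  have -> : (m + (N - l) - 2 * (j + (m - l).+1) = N - m + l - 2 - 2 * j)%N by lia.
  have -> : (m - (j + (m - l).+1) = l - 1 - j)%N by lia.
  by have -> : (j + (m - l).+1 = m - l + 1 + j)%N by lia.
have -> : ((l%:Z - 1 - j%:Z)%R < 0)%R = true by lia.
rewrite orbT /cf.
have -> : (j + (m - l).+1 <= m)%N = false by lia.
by rewrite mul0r.
Qed.
End Gen.

Section Spec.
Variable R : realType.
Local Open Scope complex_scope.

Lemma zetaX (n i : nat) : zeta R n ^+ i =
  (cos (i%:R * (2 * pi / n%:R))) +i* (sin (i%:R * (2 * pi / n%:R))).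
Proof.
elim: i => [|i IH].
  by rewrite expr0 mul0r cos0 sin0.
rewrite exprS IH /zeta.
set t := 2 * pi / n%:R.
have -> : i.+1%:R * t = t + i%:R * t by rewrite -addn1 natrD mulrDl mul1r addrC.
rewrite cosD sinD.
by rewrite [sin t * cos _ + _]addrC.
Qed.

Lemma zeta_neq (n i : nat) : (0 < i)%N -> (i < n)%N -> 1 - zeta R n ^+ i != 0.
Proof.
move=> Hi Hn.
rewrite subr_eq0 eq_sym zetaX; apply/negP => /eqP H.
case: H => Hc _.
pose y : R := i%:R * pi / n%:R.
have Hy : i%:R * (2 * pi / n%:R) = y *+ 2.
  by rewrite /y mulr2n; field; rewrite pnatr_eq0 -lt0n; lia.
rewrite Hy cos_mulr2n in Hc.
have Hc2 : cos y ^+ 2 = 1.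
  by move: Hc; rewrite mulr2n => /eqP; rewrite subr_eq => /eqP; lra.
have Hn1 : `|cos y| = 1.
  move/eqP: Hc2; rewrite sqrf_eq1 => /orP[] /eqP ->; by rewrite ?normrN normr1.
have Hs := cos1sin0 Hn1.
have Hpos : 0 < sin y.
  apply: sin_gt0_pi; apply/andP; split.
    rewrite /y divr_gt0 // ?mulr_gt0 ?pi_gt0 // ltr0n //; lia.
  rewrite /y ltr_pdivrMr ?ltr0n; last by lia.
  by rewrite mulrC ltr_pM2l ?pi_gt0 // ltr_nat.
by rewrite Hs ltxx in Hpos.
Qed.

Definition xs (n : nat) : seq R[i] := map (fun r => 1 - zeta R n ^+ r) (iota 1 n.-1).

Lemma Zaux_E n k lo s : (n - lo)%N = k ->
  Zaux R n lo s = E (map (fun r => 1 - zeta R n ^+ r) (iota lo k)) s.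
Proof.
elim: k lo s => [|k IH] lo [|a s] Hk //=.
- by rewrite big_geq //; lia.
- rewrite big_ltn; last by lia.
  rewrite (IH lo.+1 s); last by lia.
  by rewrite -(IH lo.+1 (a :: s)); last by lia.
Qed.

Lemma Zn_E n s : Zn R n s = E (xs n) s.
Proof. by rewrite /Zn (Zaux_E _ (k := n.-1)) //; lia. Qed.

Lemma Yn_G n s : Yn R n s = G (xs n) s.
Proof. by rewrite /Yn /G; apply: eq_bigr => t _; rewrite Zn_E. Qed.

Lemma xs_nz n v : v \in xs n -> v != 0.
Proof.
case/mapP => r; rewrite mem_iota => /andP[H1 H2] ->.
apply: zeta_neq => //; lia.
Qed.

End Spec.

Theorem proposition1 (R : realType) (n m l : nat) (hm : (m < n)%N) (hl : (l <= m)%N) :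
  Zn R n (nseq m 1%Z) * Zn R n (nseq l (-1)%Z) =
  ('C(n - m + l - 1, n - m - 1))%:R * Zn R n (nseq (m - l) 1%Z)
  + (\prod_(1 <= r < n) (1 - zeta R n ^+ r))
    * \sum_(0 <= j < n - m - 1)
        (let a : int := (n%:Z - m%:Z + l%:Z - 3 - 2 * j%:Z)%R in
         let b : int := (l%:Z - 1 - j%:Z)%R in
         if (a < 0)%R || (b < 0)%R then 0
         else ('C(`|a|%N, `|b|%N))%:R
              * Yn R n (nseq (m - l + 1 + j) 2%Z ++ nseq `|a|%N 1%Z)).
Proof.
rewrite !Zn_E.
have -> : \prod_(1 <= r < n) (1 - zeta R n ^+ r) = \prod_(v <- xs R n) v.
  by rewrite big_map /index_iota subn1.
under [\sum_(_ <= _ < _) _]eq_bigr => j _ do (cbv zeta; rewrite Yn_G).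
apply: final => //.
- exact: xs_nz.
- by rewrite size_map size_iota.
Qed.
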